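(* Let $n\ge1$ be an integer and let $k\in\mathbb{R}\setminus A_n$. Then there is a unique pair $(a,b)\in\mathbb{R}^2$ with $(a,b)\neq(0,0)$ satisfying both $S^{(a,b)}_{k,n+1}-S^{(a,b)}_{k,n}=-bk+2b-a$ and $4a^3+27b^2=0$; namely $a=-\frac{27(F_n(k)+1)^2}{4(G_n(k)+k-2)^2}$, $b=\frac{27(F_n(k)+1)^3}{4(G_n(k)+k-2)^3}$.
   Context: For real $k,a,b$, the generalized $k$-FL sequence is $S^{(a,b)}_{k,0}=2b$, $S^{(a,b)}_{k,1}=bk+a$, $S^{(a,b)}_{k,m}=kS^{(a,b)}_{k,m-1}+S^{(a,b)}_{k,m-2}$ ($m\ge2$). Define $f_m,g_m\in\mathbb{Z}[T]$ by $f_0=0,f_1=1,g_0=2,g_1=T$, $f_m=Tf_{m-1}+f_{m-2}$, $g_m=Tg_{m-1}+g_{m-2}$, and set $F_n=f_{n+1}-f_n$, $G_n=g_{n+1}-g_n$, so that $S^{(a,b)}_{k,n+1}-S^{(a,b)}_{k,n}=F_n(k)a+G_n(k)b$. Let $A_n=\{k\in\mathbb{R}: F_n(k)+1=0 \text{ or } G_n(k)+k-2=0\}$. *)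

(* Defs.v *)
From HB Require Import structures.
From mathcomp Require Import all_boot all_order all_algebra.
From mathcomp Require Import reals.
Set Implicit Arguments. Unset Strict Implicit. Unset Printing Implicit Defensive.
Import Order.TTheory GRing.Theory Num.Theory.
Local Open Scope ring_scope.

(* pairs (f_m, f_{m+1}) and (g_m, g_{m+1}) in Z[T] *)
Fixpoint fpair (m : nat) : {poly int} * {poly int} :=
  match m with
  | 0%N => (0, 1)
  | m'.+1 => let: (x, y) := fpair m' in (y, 'X * y + x)
  end.
Fixpoint gpair (m : nat) : {poly int} * {poly int} :=
  match m with
  | 0%N => (2%:P, 'X)
  | m'.+1 => let: (x, y) := gpair m' in (y, 'X * y + x)
  end.

Definition fpol (m : nat) : {poly int} := (fpair m).1.
Definition gpol (m : nat) : {poly int} := (gpair m).1.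

Definition Fpol (n : nat) : {poly int} := fpol n.+1 - fpol n.
Definition Gpol (n : nat) : {poly int} := gpol n.+1 - gpol n.

Definition evalZ {R : realType} (p : {poly int}) (k : R) : R :=
  (map_poly (fun z : int => z%:~R) p).[k].

(* generalized k-FL sequence: pairs (S_m, S_{m+1}) *)
Fixpoint Spair {R : realType} (k a b : R) (m : nat) : R * R :=
  match m with
  | 0%N => (2 * b, b * k + a)
  | m'.+1 => let: (x, y) := Spair k a b m' in (y, k * y + x)
  end.
Definition S {R : realType} (k a b : R) (m : nat) : R := (Spair k a b m).1.

Definition A_set {R : realType} (n : nat) (k : R) : Prop :=
  evalZ (Fpol n) k + 1 = 0 \/ evalZ (Gpol n) k + k - 2 = 0.

(* Main.v *)
Require Import Defs.
From HB Require Import structures.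
From mathcomp Require Import all_boot all_order all_algebra.
From mathcomp Require Import reals.
From mathcomp Require Import ring lra.
Import Order.TTheory GRing.Theory Num.Theory.
Local Open Scope ring_scope.

Section H.
Variable R : realType.
Lemma evalZD (p q : {poly int}) (k : R) : evalZ (p + q) k = evalZ p k + evalZ q k.
Proof. by rewrite /evalZ rmorphD hornerD. Qed.
Lemma evalZB (p q : {poly int}) (k : R) : evalZ (p - q) k = evalZ p k - evalZ q k.
Proof. by rewrite /evalZ rmorphB hornerD hornerN. Qed.
Lemma evalZXM (p : {poly int}) (k : R) : evalZ ('X * p) k = k * evalZ p k.
Proof. by rewrite /evalZ rmorphM /= map_polyX hornerM hornerX mulrC. Qed.
Lemma evalZC (c : int) (k : R) : evalZ c%:P k = c%:~R.
Proof. by rewrite /evalZ map_polyC hornerC. Qed.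
Lemma evalZX (k : R) : evalZ 'X k = k.
Proof. by rewrite /evalZ map_polyX hornerX. Qed.

Lemma fpairS m : fpair m.+1 = ((fpair m).2, 'X * (fpair m).2 + (fpair m).1).
Proof. by rewrite /=; case: (fpair m). Qed.
Lemma gpairS m : gpair m.+1 = ((gpair m).2, 'X * (gpair m).2 + (gpair m).1).
Proof. by rewrite /=; case: (gpair m). Qed.

Lemma Spair_eq (k a b : R) m : Spair k a b m =
  (evalZ (fpair m).1 k * a + evalZ (gpair m).1 k * b,
   evalZ (fpair m).2 k * a + evalZ (gpair m).2 k * b).
Proof.
elim: m => [|m IH].
  rewrite /= -(polyC0 int) -(polyC1 int) !evalZC evalZX /=.
  congr (_, _); ring.
rewrite fpairS gpairS /= IH /= !evalZD !evalZXM; congr (_, _); ring.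
Qed.

Lemma Sdiff (k a b : R) n : S k a b n.+1 - S k a b n = evalZ (Fpol n) k * a + evalZ (Gpol n) k * b.
Proof.
rewrite /S !Spair_eq /Fpol /Gpol /fpol /gpol fpairS gpairS /= !evalZB; ring.
Qed.
End H.

Theorem lemma3p5 (R : realType) (n : nat) (k : R) :
  (1 <= n)%N -> ~ A_set n k ->
  forall a b : R,
    ((a, b) <> (0, 0) /\
     S k a b n.+1 - S k a b n = - b * k + 2 * b - a /\
     4 * a ^+ 3 + 27 * b ^+ 2 = 0)
    <->
    (a = - (27 * (evalZ (Fpol n) k + 1) ^+ 2) / (4 * (evalZ (Gpol n) k + k - 2) ^+ 2) /\
     b = (27 * (evalZ (Fpol n) k + 1) ^+ 3) / (4 * (evalZ (Gpol n) k + k - 2) ^+ 3)).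
Proof.
move=> _ nA a b; rewrite Sdiff.
set F := evalZ (Fpol n) k; set G := evalZ (Gpol n) k.
have hp : F + 1 != 0 by apply/eqP => h; apply: nA; left.
have hq : G + k - 2 != 0 by apply/eqP => h; apply: nA; right.
set p := F + 1 in hp *; set q := G + k - 2 in hq *.
have eF : F = p - 1 by rewrite /p; ring.
have eG : G = q - k + 2 by rewrite /q; ring.
rewrite eF eG.
split.
- move=> [nz [e1 e2]].
  have ea : a = - q * b / p.
    have h : a * p + q * b = 0.
      by rewrite -(subrr (- b * k + 2 * b - a)) -{1}e1; ring.
    apply: (mulIf hp); rewrite divfK //.
    apply/eqP; rewrite -subr_eq0; apply/eqP; rewrite -h; ring.
  have hb : b != 0.
    apply/eqP => hb0; apply: nz; rewrite ea hb0; congr (_, _); rewrite ?mulr0 ?mul0r //; ring.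
  have eb : b = 27 * p ^+ 3 / (4 * q ^+ 3).
    have h2 : (4 * a ^+ 3 + 27 * b ^+ 2) * p ^+ 3 = b ^+ 2 * (27 * p ^+ 3 - 4 * q ^+ 3 * b).
      by rewrite ea; field.
    move: h2; rewrite e2 mul0r => /esym/eqP; rewrite mulf_eq0 expf_eq0 (negbTE hb) andbF /= subr_eq0 => /eqP h.
    have h4 : 4 * q ^+ 3 != 0 by rewrite mulf_neq0 ?expf_neq0 ?pnatr_eq0.
    by apply: (mulIf h4); rewrite divfK // h mulrC.
  split=> //; rewrite ea eb; by field; rewrite hp hq.
- move=> [-> ->]; split; last split.
  + case=> _ hb; move: hb; apply/eqP.
    by rewrite mulf_neq0 ?invr_eq0 ?mulf_neq0 ?expf_neq0 ?pnatr_eq0.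
  + by field; rewrite ?hp ?hq.
  + by field; rewrite ?hp ?hq.
Qed.
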